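(* Let $A\subseteq\mathbb{N}$ and $B,C\in\mathcal{D}$ with $A\cup B\supseteq C$. Then $d(C)-d(B)\le\underline{\underline{d}}(A)$.
   Context: $\mathbb{N}=\{1,2,3,\dots\}$. For $A\subseteq\mathbb{N}$ let $A(n)=|A\cap[1,n]|$. Let $\mathcal{D}$ be the collection of all $A\subseteq\mathbb{N}$ for which the asymptotic density $d(A)=\lim_{n\to\infty}\frac{A(n)}{n}$ exists. Define $\underline{\underline{d}}(A)=\sup\{d(B);\ B\subseteq A,\ B\in\mathcal{D}\}$. *)

(* Defs.v *)
From Stdlib Require Import Reals ClassicalEpsilon.
From Coquelicot Require Import Coquelicot.
Open Scope R_scope.

(* Subsets of N = {1,2,3,...} are predicates on nat; elements 0 are ignored
   by the counting function, which only counts k in [1, n]. *)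
Definition nset := nat -> Prop.

Definition ind (A : nset) (k : nat) : R :=
  if excluded_middle_informative (A k) then 1 else 0.

Fixpoint count (A : nset) (n : nat) : R :=
  match n with
  | O => 0
  | S m => count A m + ind A (S m)
  end.

Definition has_density (A : nset) (x : R) : Prop :=
  is_lim_seq (fun n => count A n / INR n) x.

Definition in_D (A : nset) : Prop := exists x, has_density A x.

(* d(A), meaningful when A ∈ 𝒟 *)
Definition dens (A : nset) : R := real (Lim_seq (fun n => count A n / INR n)).

Definition lowlow_d (A : nset) : Rbar :=
  Lub_Rbar (fun x => exists B : nset,
    (forall k, (1 <= k)%nat -> B k -> A k) /\ has_density B x).

(* Main.v *)
Require Import Defs.
From Stdlib Require Import Reals Lra Lia Psatz ClassicalEpsilon Arith.
From Coquelicot Require Import Coquelicot.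
Open Scope R_scope.

Ltac dem := repeat match goal with |- context [excluded_middle_informative ?P] => destruct (excluded_middle_informative P) end.

Lemma count_bounds (X : nset) n : 0 <= count X n <= INR n.
Proof.
  induction n; cbn [count pred]; [rewrite INR_0; lra|].
  unfold Defs.ind; destruct (excluded_middle_informative (X (S n))); rewrite S_INR; lra.
Qed.

Lemma err_bound (X : nset) (x : R) : has_density X x ->
  forall e, 0 < e -> exists K, forall m n, (m <= n)%nat ->
    Rabs (count X m - x * INR m) <= e * INR n + K.
Proof.
  intros H e He.
  apply is_lim_seq_spec in H.
  destruct (H (mkposreal e He)) as [N HN]. simpl in HN.
  exists ((1 + Rabs x) * INR N). intros m n Hmn.
  assert (HnN : 0 <= INR N) by apply pos_INR.
  assert (Hm : 0 <= INR m) by apply pos_INR.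
  assert (Hmn' : INR m <= INR n) by (apply le_INR; exact Hmn).
  destruct (count_bounds X m) as [c0 c1].
  assert (0 <= Rabs x) by apply Rabs_pos.
  destruct (le_lt_dec N m) as [HNm|HNm].
  - destruct m as [|m'].
    + cbn [count pred]. rewrite Rmult_0_r, Rminus_0_r, Rabs_R0. nra.
    + specialize (HN _ HNm).
      assert (Hp : 0 < INR (S m')) by (apply lt_0_INR; lia).
      assert (Eq : count X (S m') - x * INR (S m') =
                   (count X (S m') / INR (S m') - x) * INR (S m')).
      { field. lra. }
      rewrite Eq, Rabs_mult, (Rabs_pos_eq (INR (S m'))) by lra.
      assert (0 <= Rabs (count X (S m') / INR (S m') - x)) by apply Rabs_pos.
      nra.
  - assert (INR m <= INR N) by (apply le_INR; lia).
    eapply Rle_trans. apply Rabs_triang.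
    rewrite Rabs_Ropp, Rabs_mult, (Rabs_pos_eq (count X m)) by lra.
    rewrite (Rabs_pos_eq (INR m)) by lra. nra.
Qed.

Fixpoint fc (D : nset) (b : R) (n : nat) : R :=
  match n with
  | O => 0
  | S m => fc D b m +
      (if excluded_middle_informative (D (S m) /\ fc D b m + 1 <= b * INR (S m))
       then 1 else 0)
  end.

Definition Fs (D : nset) (b : R) (k : nat) : Prop :=
  D k /\ fc D b (pred k) + 1 <= b * INR k.

Lemma count_Fs D b n : count (Fs D b) n = fc D b n.
Proof.
  induction n; cbn [count fc pred]; [reflexivity|].
  rewrite IHn. unfold Defs.ind, Fs; cbn [count fc pred].
  dem; tauto || lra.
Qed.

Lemma fc_le D b n : 0 <= b -> fc D b n <= b * INR n.
Proof.
  intros Hb; induction n; cbn [count fc pred]; [rewrite ?INR_0; lra|].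
  destruct excluded_middle_informative as [[_ h]|h]; [rewrite ?INR_0; lra|].
  rewrite S_INR in *. nra.
Qed.

Lemma fc_key D b n : exists m, (m <= n)%nat /\ b * INR m - 1 <= fc D b m /\
  fc D b n - fc D b m = count D n - count D m.
Proof.
  induction n.
  - exists 0%nat; cbn [count fc pred]; rewrite ?INR_0; repeat split; try lia; lra.
  - destruct IHn as [m [h1 [h2 h3]]]. cbn [count fc pred].
    unfold Defs.ind at 1.
    destruct (excluded_middle_informative (D (S n) /\ fc D b n + 1 <= b * INR (S n))) as [[hd hc]|hn].
    + destruct excluded_middle_informative; [|contradiction].
      exists m; repeat split; try lia; lra.
    + destruct excluded_middle_informative as [hd|hd].
      * exists (S n). repeat split; try lia.
        -- cbn [count fc pred]. destruct excluded_middle_informative; [tauto|].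
           assert (~ (fc D b n + 1 <= b * INR (S n))) by tauto. lra.
        -- cbn [count fc pred]. destruct excluded_middle_informative; [tauto|].
           unfold Defs.ind; destruct excluded_middle_informative; [|contradiction]. lra.
      * exists m; repeat split; try lia; lra.
Qed.

Lemma incr (B C D : nset) :
  (forall k, (1 <= k)%nat -> C k -> D k \/ B k) ->
  forall m n, (m <= n)%nat ->
  count C n - count C m <= (count D n - count D m) + (count B n - count B m).
Proof.
  intros H m n Hmn. induction Hmn; [rewrite ?INR_0; lra|].
  cbn [count fc pred]. assert (Defs.ind C (S m0) <= Defs.ind D (S m0) + Defs.ind B (S m0)).
  { unfold Defs.ind. specialize (H (S m0) ltac:(lia)).
    repeat destruct excluded_middle_informative; try lra; tauto. }
  lra.
Qed.

Lemma dens_eq X x : has_density X x -> dens X = x.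
Proof.
  intros H. unfold dens. rewrite (is_lim_seq_unique _ _ H). reflexivity.
Qed.

Lemma lowlow_ge A x B : (forall k, (1 <= k)%nat -> B k -> A k) -> has_density B x ->
  Rbar_le (Finite x) (lowlow_d A).
Proof.
  intros H1 H2. unfold lowlow_d.
  destruct (Lub_Rbar_correct (fun x => exists B : nset,
    (forall k, (1 <= k)%nat -> B k -> A k) /\ has_density B x)) as [ub _].
  apply ub. exists B; auto.
Qed.

Theorem lemma3p10 (A B C : nset) :
  in_D B -> in_D C ->
  (forall k, (1 <= k)%nat -> C k -> A k \/ B k) ->
  Rbar_le (Finite (dens C - dens B)) (lowlow_d A).
Proof.
  intros [b HB] [c HC] H.
  rewrite (dens_eq _ _ HB), (dens_eq _ _ HC).
  set (be := c - b).
  destruct (Rle_lt_dec be 0) as [Hle|Hlt].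
  - apply Rbar_le_trans with (Finite 0). simpl; unfold be in *; lra.
    apply (lowlow_ge A 0 (fun _ => False)). tauto.
    unfold has_density.
    apply is_lim_seq_ext with (fun _ => 0).
    { intros n. assert (count (fun _ => False) n = 0).
      { induction n; cbn [count fc pred]; [reflexivity|]. unfold Defs.ind.
        destruct excluded_middle_informative; [contradiction|lra]. }
      rewrite H0. unfold Rdiv; ring. }
    apply is_lim_seq_const.
  - set (D := fun k => C k /\ ~ B k).
    apply (lowlow_ge A be (Fs D be)).
    { intros k Hk [[hc hb] _]. destruct (H k Hk hc); tauto. }
    assert (Hinc := incr B C D ltac:(intros k _ hc; unfold D;
              destruct (excluded_middle_informative (B k)); tauto)).
    unfold has_density. apply is_lim_seq_spec. intros eps.
    assert (He : 0 < eps / 8) by (destruct eps; simpl; lra).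
    destruct (err_bound _ _ HC _ He) as [K1 HK1].
    destruct (err_bound _ _ HB _ He) as [K2 HK2].
    set (K := 1 + 2 * Rabs K1 + 2 * Rabs K2).
    assert (HK0 : 0 < K) by (unfold K; pose proof (Rabs_pos K1); pose proof (Rabs_pos K2); lra).
    destruct (nfloor_ex (2 * K / eps)) as [N0 [_ HN0]].
    { apply Rlt_le, Rdiv_lt_0_compat; [lra|destruct eps; simpl; lra]. }
    exists (S N0). intros n Hn.
    rewrite count_Fs.
    assert (Hnp : 0 < INR n) by (apply lt_0_INR; lia).
    assert (HnN : INR (S N0) <= INR n) by (apply le_INR; lia).
    rewrite S_INR in HnN.
    destruct eps as [e epos]; simpl in *.
    assert (HKn : 2 * K < e * INR n).
    { assert (2 * K = (2 * K / e) * e) by (field; lra). nra. }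
    destruct (fc_key D be n) as [m [hm [h1 h2]]].
    pose proof (fc_le D be n (Rlt_le _ _ Hlt)) as hup.
    pose proof (Hinc m n hm) as hi.
    pose proof (HK1 m n hm) as e1. pose proof (HK1 n n (le_n _)) as e2.
    pose proof (HK2 m n hm) as e3. pose proof (HK2 n n (le_n _)) as e4.
    apply Rabs_def1 in e1 as [e1a e1b] || idtac.
    assert (Hbnd : be * INR n - fc D be n <= 1 + e / 2 * INR n + 2 * Rabs K1 + 2 * Rabs K2).
    { apply Rabs_le_between in e1. apply Rabs_le_between in e2.
      apply Rabs_le_between in e3. apply Rabs_le_between in e4.
      pose proof (Rle_abs K1). pose proof (Rle_abs K2). unfold be in *. nra. }
    assert (Eq : fc D be n / INR n - be = (fc D be n - be * INR n) / INR n)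
      by (field; lra).
    rewrite Eq, Rabs_div by lra. rewrite (Rabs_pos_eq (INR n)) by lra.
    apply Rmult_lt_reg_r with (INR n); [rewrite ?INR_0; lra|].
    unfold Rdiv. rewrite Rmult_assoc, Rinv_l, Rmult_1_r by lra.
    rewrite Rabs_left1 by lra. unfold K in HKn. lra.
Qed.
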